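(* Let $V$ be a finite set, let $d$ be a monotone and consistent symmetric set function on $V$, and let $\tau\in\mathbb{R}$. Let $\mathcal{V}$ be a partition of $V$ such that $\lambda_{(V,d)}(u,v)\geq\tau$ for every pair $u,v\in V$ with $[u]=[v]$. Then for every pair $s,t\in V$ with $[s]\neq[t]$, $$\min\{\tau,\lambda_{(\mathcal{V},d_\mathcal{V})}([s],[t])\}=\min\{\tau,\lambda_{(V,d)}(s,t)\},$$ and moreover $$\min\{\tau,\lambda_{(\mathcal{V},d_\mathcal{V})}\}=\min\{\tau,\lambda_{(V,d)}\}.$$
   Context: A symmetric set function $d$ on a finite set $V$ assigns a real number $d(S,T)$ to every ordered pair $(S,T)$ of disjoint subsets of $V$, such that $d(S,T)=d(T,S)$. It is monotone if $d(S,T')\leq d(S,T)$ whenever $S,T$ are disjoint and $T'\subseteq T$; consistent if for all pairwise disjoint $R,S,T$, $d(S,R)\geq d(T,R)$ implies $d(S,R\cup T)\geq d(S\cup R,T)$. For $s,t\in V$, $\lambda_{(V,d)}(s,t)=\min\{d(S,V\setminus S)\mid s\in S\subseteq V,\ t\notin S\}$ and $\lambda_{(V,d)}=\min\{\lambda_{(V,d)}(s,t)\mid s,t\in V\}$, with the minimum of an empty set being $+\infty$. For a partition $\mathcal{V}$ of $V$ and $v\in V$, $[v]$ denotes the class of $\mathcal{V}$ containing $v$; for a set $\mathcal{S}$ of classes, $\cup\mathcal{S}$ is the union of its classes. The induced function on $\mathcal{V}$ is $d_\mathcal{V}(\mathcal{S},\mathcal{T})=d(\cup\mathcal{S},\cup\mathcal{T})$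 for disjoint sets $\mathcal{S},\mathcal{T}$ of classes; it is a symmetric set function on the finite set $\mathcal{V}$, and $\lambda_{(\mathcal{V},d_\mathcal{V})}(\cdot,\cdot)$, $\lambda_{(\mathcal{V},d_\mathcal{V})}$ are defined analogously. *)

(* Defs.v *)
From HB Require Import structures.
From mathcomp Require Import all_boot all_order all_algebra.
From mathcomp Require Import constructive_ereal.
Set Implicit Arguments. Unset Strict Implicit. Unset Printing Implicit Defensive.
Import Order.TTheory GRing.Theory Num.Theory.
Local Open Scope ring_scope.
Local Open Scope ereal_scope.

Section SetFun.
Variables (R : realFieldType) (T : finType).

(* A set function d : assigns a real to every pair of subsets; only the values
   on disjoint pairs matter. *)
Definition symmetric_sf (d : {set T} -> {set T} -> R) : Prop :=
  forall S U : {set T}, [disjoint S & U] -> d S U = d U S.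

Definition monotone_sf (d : {set T} -> {set T} -> R) : Prop :=
  forall S U U' : {set T}, [disjoint S & U] -> U' \subset U -> (d S U' <= d S U)%R.

Definition consistent_sf (d : {set T} -> {set T} -> R) : Prop :=
  forall Rr S U : {set T},
    [disjoint Rr & S] -> [disjoint Rr & U] -> [disjoint S & U] ->
    (d U Rr <= d S Rr)%R -> (d (S :|: Rr) U <= d S (Rr :|: U))%R.

Definition lambda_st (d : {set T} -> {set T} -> R) (s t : T) : \bar R :=
  \big[mine/+oo]_(S : {set T} | (s \in S) && (t \notin S)) (d S (~: S))%:E.

Definition lambda (d : {set T} -> {set T} -> R) : \bar R :=
  \big[mine/+oo]_(s : T) \big[mine/+oo]_(t : T) lambda_st d s t.

End SetFun.

Definition classes (V : finType) (P : {set {set V}}) : finType :=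
  {C : {set V} | C \in P}.

Definition ucover (V : finType) (P : {set {set V}}) (S : {set classes P}) : {set V} :=
  \bigcup_(X in S) val X.

Definition induced (R : realFieldType) (V : finType) (P : {set {set V}})
  (d : {set V} -> {set V} -> R) : {set classes P} -> {set classes P} -> R :=
  fun S U => d (ucover S) (ucover U).
Arguments induced {R V} P d.

(* Main.v *)
Require Import Defs.
From HB Require Import structures.
From mathcomp Require Import all_boot all_order all_algebra.
From mathcomp Require Import constructive_ereal.
Import Order.TTheory GRing.Theory Num.Theory.
Local Open Scope ring_scope.
Local Open Scope ereal_scope.

Section Aux.
Variables (V : finType) (P : {set {set V}}).
Hypothesis partP : partition P [set: V].

Lemma cls_of (x : V) : exists X : classes P, x \in val X.
Proof.
case/and3P: partP => /eqP cov _ _.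
have xc : x \in cover P by rewrite cov inE.
by exists (exist _ (pblock P x) (pblock_mem xc)); rewrite /= mem_pblock.
Qed.

Lemma cls_uniq {X Y : classes P} {x} : x \in val X -> x \in val Y -> X = Y.
Proof.
case/and3P: partP => _ tI _ xX xY; apply: val_inj.
by rewrite -(def_pblock tI (valP X) xX) -(def_pblock tI (valP Y) xY).
Qed.

Lemma cls_ne (X : classes P) : exists x, x \in val X.
Proof.
case/and3P: partP => _ _ n0.
have : val X != set0 by apply: contraNneq n0 => <-; exact: (valP X).
by case/set0Pn => x; exists x.
Qed.

Lemma mem_ucover (S : {set classes P}) {x} {X : classes P} :
  x \in val X -> (x \in ucover S) = (X \in S).
Proof.
move=> hX; apply/bigcupP/idP => [[Y hY xY]|XS]; last by exists X.
by rewrite (cls_uniq hX xY).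
Qed.

Lemma ucoverC (S : {set classes P}) : ucover (~: S) = ~: ucover S.
Proof.
apply/setP => x; case: (cls_of x) => X hX.
by rewrite inE !(mem_ucover _ hX) inE.
Qed.
End Aux.
Arguments cls_of {V P}.
Arguments cls_ne {V P}.
Arguments mem_ucover {V P} partP S {x X}.
Arguments ucoverC {V P} partP S.

Theorem lemma6 (R : realFieldType) (V : finType) (d : {set V} -> {set V} -> R)
  (tau : R) (P : {set {set V}}) :
  symmetric_sf d -> monotone_sf d -> consistent_sf d ->
  partition P [set: V] ->
  (forall (X : classes P) (u v : V), u \in val X -> v \in val X ->
     tau%:E <= lambda_st d u v) ->
  (forall (X Y : classes P) (s t : V), s \in val X -> t \in val Y -> X != Y ->
     mine tau%:E (lambda_st (induced P d) X Y) = mine tau%:E (lambda_st d s t))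
  /\ mine tau%:E (lambda (induced P d)) = mine tau%:E (lambda d).
Proof.
move=> _ _ _ partP hyp.
have part1 : forall (X Y : classes P) (s t : V), s \in val X -> t \in val Y -> X != Y ->
     mine tau%:E (lambda_st (induced P d) X Y) = mine tau%:E (lambda_st d s t).
  move=> X Y s t sX tY nXY; apply: le_anti; apply/andP; split.
  - rewrite le_min ge_min lexx /=; apply: le_bigmin => [|S /andP [sS tS]].
      exact: leey.
    case: (leP tau (d S (~: S))) => [le|lt].
      by rewrite ge_min lee_fin le.
    have claim : forall (Z : classes P) u v, u \in val Z -> v \in val Z ->
        u \in S -> v \in S.
      move=> Z u v uZ vZ uS; apply/negPn/negP => vS.
      have := hyp Z u v uZ vZ.
      have : lambda_st d u v <= (d S (~: S))%:E.
        by apply: bigmin_le_cond; rewrite uS vS.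
      move=> h1 h2; have := le_trans h2 h1; rewrite lee_fin => h3.
      by have := lt_le_trans lt h3; rewrite ltxx.
    set S' := [set Z : classes P | val Z \subset S].
    have eqS : ucover S' = S.
      apply/setP => x; case: (cls_of partP x) => Z hZ.
      rewrite (mem_ucover partP _ hZ) inE.
      apply/subsetP/idP => [sub|xS]; first exact: sub x hZ.
      by move=> y yZ; exact: (claim Z x y hZ yZ xS).
    rewrite ge_min; apply/orP; right.
    apply: (@bigmin_inf _ _ _ _ S').
      rewrite !inE; apply/andP; split.
        by apply/subsetP => y yX; exact: (claim X s y sX yX sS).
      by apply/negP => /subsetP /(_ t tY); apply/negP.
    by rewrite /induced (ucoverC partP) eqS.
  - rewrite le_min ge_min lexx /= ge_min; apply/orP; right.
    apply: le_bigmin => [|S' /andP [XS YS]]; first exact: leey.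
    rewrite /induced (ucoverC partP); apply: bigmin_le_cond.
    by rewrite (mem_ucover partP _ sX) (mem_ucover partP _ tY) XS.
split => //.
apply: le_anti; apply/andP; split.
- rewrite le_min ge_min lexx /=.
  apply: le_bigmin => [|s _]; first exact: leey.
  apply: le_bigmin => [|t _]; first exact: leey.
  case: (cls_of partP s) => X sX; case: (cls_of partP t) => Y tY.
  case: (eqVneq X Y) => [eXY|nXY].
    by rewrite ge_min; apply/orP; left; apply: (hyp X) => //; rewrite eXY.
  apply: (le_trans (y := mine tau%:E (lambda_st (induced P d) X Y))).
    rewrite le_min ge_min lexx /= ge_min; apply/orP; right.
    rewrite /lambda; have h := bigmin_le (+oo : \bar R) X (fun X => \big[mine/+oo]_(Y : classes P) lambda_st (induced P d) X Y).
    have h2 := bigmin_le (+oo : \bar R) Y (lambda_st (induced P d) X).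
    exact: le_trans h h2.
  by rewrite (part1 X Y s t sX tY nXY) ge_min lexx orbT.
- rewrite le_min ge_min lexx /=.
  apply: le_bigmin => [|X _]; first exact: leey.
  apply: le_bigmin => [|Y _]; first exact: leey.
  case: (eqVneq X Y) => [->|nXY].
    rewrite ge_min; apply/orP; right; apply: le_bigmin => [|S /andP [h1 h2]]; [exact: leey | by rewrite h1 in h2].
  case: (cls_ne partP X) => s sX; case: (cls_ne partP Y) => t tY.
  apply: (le_trans (y := mine tau%:E (lambda_st d s t))).
    rewrite le_min ge_min lexx /= ge_min; apply/orP; right.
    rewrite /lambda; have h := bigmin_le (+oo : \bar R) s (fun s => \big[mine/+oo]_(t : V) lambda_st d s t).
    have h2 := bigmin_le (+oo : \bar R) t (lambda_st d s).
    exact: le_trans h h2.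
  by rewrite -(part1 X Y s t sX tY nXY) ge_min lexx orbT.
Qed.
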